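(* Consider a proof-of-work blockchain using the tie-breaking rule based on partial PoW described in the context, adopted by all honest miners. Suppose an attacker performs a Match against post-generated block. Then, on average, the proportion $\gamma$ of honest miners (by hashrate) that mine on the attacker's chain satisfies $$\gamma \le 1 - \frac{1}{2}\exp\!\left(-\frac{2\Delta_B + 2\Delta_P}{T}\right).$$
   Context: Setting. $T$ is the average block generation interval of the whole network. A block header $h$ is a valid block if $H(h)<\mathit{Target}$, where $H$ is a cryptographic hash function. A partial PoW is a header with $H(h)<n\,\mathit{Target}$, where $n>1$ is a fixed difficulty adjuster. Miners publish partial PoWs when found. Every block reaches every miner less than $\Delta_B$ after publication, and every partial PoW less than $\Delta_P$ after publication. Clock drift among miners is negligible. The attacker can instantly learn of any published message and instantly deliver any message to any miner. Rule. A miner regards a valid partial PoW as sufficiently shared once $2\Delta_B$ has elapsed since its arrival at that miner. Each block contains a shared partial PoW, namely the XOR of the hashes of a set of partial PoWs. An honest miner uses for this set the valid partial PoWs for which $2\Delta_B+\Delta_P$ has elapsed since their arrival. The set is transmitted with the block. Chain ties. A chain tie occurs when the predefined fork choice rule (e.g. longest chain) does not give a unique chain. The arrival time of a chain is the arrival time of its head. A miner considers only the tied chains arriving within the acceptance window $w=\Delta_B$ of the earliest-arriving tied chain. For each such chain, the miner takes the union of the shared partial PoW sets of its blocks. The chain's weight is $-1$ if some member is not valid and sufficiently shared for that miner; otherwise it is the size of the union. The miner mines on a chain of maximum weight, breaking remaining ties uniformly at random. Attack. In a Match against post-generated block, the attacker withholds a block it generated and publishes it when an honest miner publishes a competing block,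 creating a chain tie. *)

(* Defs.v *)
From HB Require Import structures.
From mathcomp Require Import all_boot all_order all_algebra.
From mathcomp Require Import all_classical all_reals all_analysis.
Set Implicit Arguments. Unset Strict Implicit. Unset Printing Implicit Defensive.
Import Order.TTheory GRing.Theory Num.Theory.
Local Open Scope ring_scope.

(* One instance of the attack "Match against post-generated block".
   H : the honest miners, Q : the (candidate) partial PoWs.
   All times are real numbers on a common clock (clock drift negligible). *)
Record scenario (H Q : finType) (R : realType) := Scenario {
  t_att  : R;              (* generation time of the attacker's withheld block *)
  t_hon  : R;              (* generation time of the honest competing block    *)
  t_pub  : R;              (* publication time of the honest block; the
                              attacker publishes its block at the same time     *)
  gen    : H;              (* honest miner who generated the competing block   *)
  recvH  : H -> R;         (* arrival time of the honest block at each miner   *)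
  recvA  : H -> R;         (* arrival time of the attacker's block             *)
  ppub   : Q -> R;         (* publication time of each partial PoW             *)
  parr   : H -> Q -> R;    (* arrival time of each partial PoW at each miner   *)
  pvalid : Q -> bool;      (* validity of a partial PoW (H(h) < n Target)      *)
  S0     : {set Q};        (* union of shared-partial-PoW sets of the common prefix *)
  SA     : {set Q};        (* shared partial PoW set of the attacker's block   *)
  SH     : {set Q}         (* shared partial PoW set of the honest block       *)
}.

Section Model.
Variables (H Q : finType) (R : realType).
Implicit Types (s : scenario H Q R) (m : H) (p : Q).

(* the fork choice of miner m is made when the tie arises, i.e. when the
   second of the two tied chains arrives *)
Definition dec_time (s : scenario H Q R) m : R := Num.max (recvH s m) (recvA s m).

Definition suff_shared (DB : R) s m p : bool :=
  pvalid s p && (parr s m p + 2 * DB <= dec_time s m).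

(* weight of a chain whose blocks' shared partial PoW sets have union S *)
Definition chain_weight (DB : R) s m (S : {set Q}) : R :=
  if [forall p in S, suff_shared DB s m p] then (#|S|)%:R else -1.

(* probability (over the uniform tie-break) that honest miner m mines on the
   attacker's chain, with acceptance window w = DB *)
Definition pref_att (DB : R) s m : R :=
  if recvA s m + DB < recvH s m then 1        (* honest chain outside window *)
  else if recvH s m + DB < recvA s m then 0   (* attacker chain outside window *)
  else
    let wA := chain_weight DB s m (S0 s :|: SA s) in
    let wH := chain_weight DB s m (S0 s :|: SH s) in
    if wH < wA then 1 else if wA == wH then 2^-1 else 0.

(* expected proportion (by honest hashrate hr) of honest miners mining on the
   attacker's chain *)
Definition att_share (hr : H -> R) (DB : R) s : R :=
  \sum_m hr m * pref_att DB s m.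

Definition honest_set (DB DP : R) s : {set Q} :=
  [set p | pvalid s p && (parr s (gen s) p + (2 * DB + DP) <= t_hon s)].

Definition admissible (DB DP : R) s : Prop :=
  [/\ t_att s < t_hon s,                 (* post-generated honest block *)
      t_hon s <= t_pub s,
      (forall m, t_hon s <= recvH s m /\ recvH s m < t_pub s + DB) &
   [/\
      (forall m, t_pub s <= recvA s m /\ recvA s m < t_pub s + DB),
      (forall m p, ppub s p <= parr s m p /\ parr s m p < ppub s p + DP),
      SH s = honest_set DB DP s
    & (forall p, p \in SA s -> pvalid s p -> ppub s p <= t_att s)]].

End Model.

(* Main.v *)
Require Import Defs.
From HB Require Import structures.
From mathcomp Require Import all_boot all_order all_algebra.
From mathcomp Require Import ring lra.
From mathcomp Require Import all_classical all_reals all_analysis.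
Import Order.TTheory GRing.Theory Num.Theory.
Local Open Scope ring_scope.
Local Open Scope classical_set_scope.
Lemma pref_le (H Q : finType) (R : realType) (DB DP : R) (s : scenario H Q R) m :
  0 < DB -> 0 < DP -> admissible DB DP s -> 2*DB+2*DP <= t_hon s - t_att s ->
  pref_att DB s m <= 2^-1.
Proof.
move=> DB0 DP0 [ta th hH [hA hP hSH hSA]] gap.
have [m1 m2] := hH m; have [a1 a2] := hA m.
rewrite /pref_att.
case: ifP => [c1|_]; first by exfalso; lra.
case: ifP => _; first by lra.
have key : ~~ (chain_weight DB s m (S0 s :|: SH s) < chain_weight DB s m (S0 s :|: SA s)).
  rewrite -leNgt /chain_weight.
  case: ifP => hAll; last first.
    by case: ifP => _ //; apply: (@le_trans _ _ 0); rewrite ?ler0n //; lra.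
  have sub : S0 s :|: SA s \subset S0 s :|: SH s.
    apply/fintype.subsetP => p; rewrite !inE => /orP[->//|pA]; apply/orP; right.
    have /forall_inP/(_ p) := hAll; rewrite !inE pA orbT => /(_ isT) /andP[pv _].
    have := hSA p pA pv; have [_ h2] := hP (gen s) p => h3.
    rewrite hSH inE pv /=; lra.
  have -> : [forall p in S0 s :|: SH s, suff_shared DB s m p].
    apply/forall_inP => p; rewrite inE => /orP[p0|pH].
      by have /forall_inP/(_ p) := hAll; rewrite !inE p0 => /(_ isT).
    move: pH; rewrite hSH inE => /andP[pv hp].
    rewrite /suff_shared pv /= /dec_time le_max.
    have [h1 _] := hP (gen s) p; have [_ h2] := hP m p.
    apply/orP; left; lra.
  by rewrite ler_nat subset_leq_card.
rewrite (negbTE key).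
by case: ifP => _; lra.
Qed.
Lemma share_bound (H Q : finType) (R : realType) (hr : H -> R) (DB DP : R) (s : scenario H Q R) (b : bool) :
  0 < DB -> 0 < DP -> (forall m, 0 <= hr m) -> \sum_m hr m = 1 ->
  admissible DB DP s -> (b -> 2*DB+2*DP <= t_hon s - t_att s) ->
  0 <= att_share hr DB s <= 1 - 2^-1 * (b%:R).
Proof.
move=> DB0 DP0 hr0 hr1 adm hb.
have p01 m : 0 <= pref_att DB s m <= 1.
  rewrite /pref_att; repeat case: ifP => _ //; lra.
apply/andP; split.
  by apply: sumr_ge0 => m _; apply: mulr_ge0 => //; case/andP: (p01 m).
case: b hb => hb.
  apply: (@le_trans _ _ (\sum_m hr m * 2^-1)).
    apply: ler_sum => m _; apply: ler_wpM2l => //; exact: pref_le (hb isT).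
  by rewrite -mulr_suml hr1 /=; lra.
apply: (@le_trans _ _ (\sum_m hr m * 1)).
  by apply: ler_sum => m _; apply: ler_wpM2l => //; case/andP: (p01 m).
by rewrite -mulr_suml hr1 /=; lra.
Qed.

Theorem lemma2 (R : realType) (d : measure_display) (Omega : measurableType d)
  (P : probability Omega R) (H Q : finType) (T DB DP beta : R)
  (hr : H -> R) (sc : Omega -> scenario H Q R) :
  0 < T -> 0 < DB -> 0 < DP -> 0 < beta <= 1 ->
  (forall m, 0 <= hr m) -> \sum_m hr m = 1 ->
  (forall w, admissible DB DP (sc w)) ->
  measurable_fun setT (fun w => t_hon (sc w) - t_att (sc w)) ->
  (forall t, 0 <= t ->
     P [set w | t <= t_hon (sc w) - t_att (sc w)] = (expR (- (beta * t / T)))%:E) ->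
  measurable_fun setT (fun w => att_share hr DB (sc w)) ->
  (\int[P]_w (att_share hr DB (sc w))%:E
     <= (1 - 2^-1 * expR (- ((2 * DB + 2 * DP) / T)))%:E)%E.
Proof.
move=> T0 DB0 DP0 /andP[b0 b1] hr0 hr1 adm mg hP mf.
set t0 := 2 * DB + 2 * DP.
set E := [set w | t0 <= t_hon (sc w) - t_att (sc w)].
have mE : measurable E.
  have -> : E = setT `&` ((fun w => t_hon (sc w) - t_att (sc w)) @^-1` `[t0, +oo[).
    by apply/seteqP; split => w /=; rewrite /E /= in_itv /= andbT => // -[].
  exact: mg (measurable_itv _).
have bnd w : 0 <= att_share hr DB (sc w) <= 1 - 2^-1 * ((w \in E)%:R).
  apply: (@share_bound H Q R hr DB DP (sc w) (w \in E)) => //; try exact: adm; by move=> /set_mem.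
apply: (@le_trans _ _ (\int[P]_w (1 - 2^-1 * (\1_E w))%:E)%E).
  apply: ge0_le_integral => //.
  - by move=> w _; rewrite lee_fin; case/andP: (bnd w).
  - exact/measurable_realfun.measurable_EFinP.
  - apply/measurable_realfun.measurable_EFinP; apply: measurable_realfun.measurable_funB => //.
    apply: measurable_realfun.measurable_funM => //; exact: measurable_realfun.measurable_indic.
  - move=> w _; rewrite lee_fin; case/andP: (bnd w) => _.
    by rewrite indicE.
rewrite (eq_integral (fun w => (cst 1 w)%:E - ((fun w => 2^-1 * \1_E w) w)%:E)%E); last first.
  by move=> w _; rewrite EFinB.
rewrite integralB_EFin //; last 2 first.
- exact: finite_measure_integrable_cst.
- rewrite (_ : EFin \o _ = (fun w => (2^-1)%:E * (\1_E w)%:E)%E); last first.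
    by apply/funext => w /=; rewrite EFinM.
  apply: integrableZl => //; exact: integrable_indic.
rewrite (_ : (\int[P]_x (cst 1 x)%:E = 1)%E); last first.
  rewrite (eq_integral (cst 1%E)) // (@integral_cst _ _ _ P setT measurableT 1%E).
  by rewrite mul1e; apply: probability_setT.
rewrite (eq_integral (fun w => (2^-1)%:E * (\1_E w)%:E)%E); last first.
  by move=> w _; rewrite EFinM.
rewrite integralZl //; last exact: integrable_indic.
rewrite (_ : (\int[P]_x (\1_E x)%:E = (expR (- (beta * t0 / T)))%:E)%E); last first.
  rewrite integral_indic // setIT; apply: hP; rewrite /t0; lra.
rewrite -EFinM -EFinB lee_fin lerD2l lerN2 ler_pM2l ?invr_gt0 ?ltr0n //.
rewrite ler_expR lerN2 ler_pM2r ?invr_gt0 //.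
by rewrite ler_piMl // /t0; lra.
Qed.
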